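(* Define $a(n)$ by $\sum_{n\ge1}a(n)q^n=\frac{1}{1+q}\sum_{n=1}^\infty q^{n(3n+1)/2}(1-q^{2n+1})$. Then for every positive integer $n$, $$a(n)=\begin{cases}-(-1)^{n-\lfloor n\rfloor_p}, & \text{if } R(\lfloor n\rfloor_p) \text{ is even and positive},\\ 0, & \text{if } R(\lfloor n\rfloor_p)\text{ is odd and negative},\\ (-1)^{n-\lfloor n\rfloor_p}, & \text{if } R(\lfloor n\rfloor_p)\text{ is odd and positive},\\ -2(-1)^{n-\lfloor n\rfloor_p}, & \text{if } R(\lfloor n\rfloor_p)\text{ is even and negative}.\end{cases}$$
   Context: $\mathcal{P}=\{m(3m+1)/2:m\in\mathbb{Z}\}$ is the set of (generalized) pentagonal numbers; for $n=m(3m+1)/2\in\mathcal{P}$ put $R(n)=m$ (well defined). $\lfloor n\rfloor_p$ is the largest element of $\mathcal{P}$ that is $\le n$. *)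

(* Defs.v *)
From mathcomp Require Import all_boot all_order all_algebra.
Set Implicit Arguments. Unset Strict Implicit. Unset Printing Implicit Defensive.
Import Order.TTheory GRing.Theory Num.Theory.
Local Open Scope ring_scope.

(* Generalized pentagonal number m(3m+1)/2 for m : int (exact division). *)
Definition pent (m : int) : int := ((m * (3 * m + 1)) %/ 2)%Z.

Definition is_pent (n : int) : Prop := exists m : int, pent m = n.

Definition is_pfloor (n p : int) : Prop :=
  is_pent p /\ p <= n /\ (forall p', is_pent p' -> p' <= n -> p' <= p).

(* Coefficient of q^k in  sum_{i>=1} q^{i(3i+1)/2} (1 - q^{2i+1})
   (only i <= k can contribute to q^k). *)
Definition numc (k : nat) : int :=
  \sum_(1 <= i < k.+1)
     (((((i * (3 * i + 1)) %/ 2)%N == k) : int)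
      - (((((i * (3 * i + 1)) %/ 2) + (2 * i + 1))%N == k) : int)).

(* a(n): coefficient of q^n in (1/(1+q)) * (the series above),
   with 1/(1+q) = sum_{j>=0} (-1)^j q^j (Cauchy product). *)
Definition acoef (n : nat) : int :=
  \sum_(0 <= j < n.+1) (-1) ^+ j * numc (n - j).

(* Main.v *)
Set Warnings "-notation-overridden,-ambiguous-paths".
Require Import Defs.
From mathcomp Require Import all_boot all_order all_algebra.
From mathcomp Require Import zify.
Import Order.TTheory GRing.Theory Num.Theory.
Local Open Scope ring_scope.

Definition Q (i : nat) : nat := ((i * (3 * i + 1)) %/ 2)%N.

Lemma QS i : Q i.+1 = (Q i + (3 * i + 2))%N.
Proof.
rewrite /Q -divnDMl //; congr (_ %/ _)%N; lia.
Qed.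

Lemma Q_ge i : (i <= Q i)%N.
Proof. elim: i => [|i IH] //; rewrite QS; lia. Qed.

Lemma Q_mono : {homo Q : i j / (i <= j)%N >-> (i <= j)%N}.
Proof. apply: homo_leq => //; [exact: leq_trans | move=> i; rewrite QS; lia]. Qed.

Lemma pentP (k : nat) : pent (Posz k) = Posz (Q k).
Proof.
rewrite /pent /Q -divz_nat; congr (_ %/ _)%Z.
Qed.

Lemma pentN (k : nat) : pent (- Posz k.+1) = Posz (Q k + (2 * k + 1)).
Proof.
rewrite /pent /Q -divnDMl // -divz_nat; congr (_ %/ _)%Z.
nia.
Qed.

Lemma sumL (N x : nat) :
  \sum_(0 <= p < N) (-1) ^+ p * (Posz (nat_of_bool (x == p))) =
  (Posz (nat_of_bool (x < N)%N)) * (-1) ^+ x.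
Proof.
elim: N => [|N IH]; first by rewrite big_geq // ltn0 mul0r.
rewrite big_nat_recr //= IH.
case: (ltngtP x N) => h.
- by rewrite (ltn_trans h (ltnSn N)) mulr0 addr0.
- by rewrite ltnS leqNgt h mulr0 addr0.
- by rewrite h ltnSn mulr1 mul0r add0r mul1r.
Qed.

Lemma sign_sq (i : nat) : (-1) ^+ i * (-1) ^+ i = 1 :> int.
Proof. by rewrite -exprD -signr_odd addnn odd_double. Qed.

Lemma signB (n i : nat) : (i <= n)%N -> (-1) ^+ (n - i) = (-1) ^+ n * (-1) ^+ i :> int.
Proof.
move=> hi; rewrite -{2}(subnK hi) exprD -mulrA sign_sq mulr1 //.
Qed.

Lemma acoefE n : acoef n = (-1) ^+ n * \sum_(0 <= p < n.+1) (-1) ^+ p * numc p.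
Proof.
rewrite /acoef big_nat_rev mulr_sumr; apply: eq_big_nat => i /andP[_ hi].
rewrite add0n subSS subKn // mulrA -signB //.
Qed.

Lemma numcE p N : (p < N)%N -> numc p =
  \sum_(1 <= i < N) ((Posz (nat_of_bool (Q i == p))) - (Posz (nat_of_bool (Q i + (2 * i + 1) == p)%N))).
Proof.
move=> hp.
have -> : numc p = \sum_(1 <= i < p.+1) ((Posz (nat_of_bool (Q i == p))) - (Posz (nat_of_bool (Q i + (2 * i + 1) == p)%N))) by [].
rewrite [RHS](big_cat_nat (n:=p.+1)) //=.
rewrite -[LHS]addr0; congr (_ + _); symmetry.
rewrite big_nat_cond big1 // => i /andP[/andP[hi _] _].
have := Q_ge i => hq.
rewrite (_ : (Q i == p) = false); last by apply/eqP; lia.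
rewrite (_ : (Q i + (2 * i + 1) == p)%N = false); last by apply/eqP; lia.
by [].
Qed.

Definition term n i : int :=
  (Posz (nat_of_bool (Q i < n.+1)%N)) * (-1) ^+ (Q i)
  - (Posz (nat_of_bool (Q i + (2 * i + 1) < n.+1)%N)) * (-1) ^+ (Q i + (2 * i + 1)).

Lemma AE n : \sum_(0 <= p < n.+1) (-1) ^+ p * numc p = \sum_(1 <= i < n.+1) term n i.
Proof.
rewrite (eq_big_nat _ _ (F2 := fun p => \sum_(1 <= i < n.+1) ((-1) ^+ p * (Posz (nat_of_bool (Q i == p))) - (-1) ^+ p * (Posz (nat_of_bool (Q i + (2 * i + 1) == p)%N))))); last first.
  move=> p /andP[_ hp]; rewrite (@numcE p n.+1 hp) mulr_sumr; apply: eq_bigr => i _; by rewrite mulrBr.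
rewrite exchange_big_nat; apply: eq_bigr => i _.
by rewrite sumrB !sumL.
Qed.

Definition s i : int := (-1) ^+ (Q i).

Lemma sign_odd1 i : (-1) ^+ (2 * i + 1) = -1 :> int.
Proof. by rewrite -signr_odd oddD oddM /= expr1. Qed.

Lemma term_full n i : (Q i + (2 * i + 1) <= n)%N -> term n i = 2 * s i.
Proof.
move=> h; rewrite /term /s.
rewrite (_ : (Q i < n.+1)%N = true); last by apply/idP; lia.
rewrite (_ : (Q i + (2 * i + 1) < n.+1)%N = true); last by apply/idP; lia.
by rewrite exprD sign_odd1 !mul1r mulrN1 opprK -mulr2n mulr_natl.
Qed.

Lemma term_half n i : (Q i <= n)%N -> (n < Q i + (2 * i + 1))%N -> term n i = s i.
Proof.
move=> h1 h2; rewrite /term /s.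
rewrite (_ : (Q i < n.+1)%N = true); last by apply/idP; lia.
rewrite (_ : (Q i + (2 * i + 1) < n.+1)%N = false); last by apply/negbTE; rewrite -leqNgt; lia.
by rewrite mul0r subr0 mul1r.
Qed.

Lemma term_zero n i : (n < Q i)%N -> term n i = 0.
Proof.
move=> h1; rewrite /term.
rewrite (_ : (Q i < n.+1)%N = false); last by apply/negbTE; rewrite -leqNgt; lia.
rewrite (_ : (Q i + (2 * i + 1) < n.+1)%N = false); last by apply/negbTE; rewrite -leqNgt; lia.
by rewrite !mul0r subr0.
Qed.

Lemma sS j : s j.+1 = s j * (-1) ^+ j.
Proof.
rewrite /s QS exprD; congr (_ * _).
by rewrite -signr_odd -[RHS]signr_odd oddD oddM /= addbF.
Qed.

Definition B j : int := \sum_(1 <= i < j.+1) 2 * s i.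

Lemma Bval j : B j = if odd j then 2 * s j else 0.
Proof.
elim: j => [|j IH]; first by rewrite /B big_geq.
rewrite /B big_nat_recr //= -/(B j) IH sS.
case: (boolP (odd j)) => hj /=.
- by rewrite -signr_odd hj expr1 mulrN1 mulrN addrN.
- by rewrite -signr_odd (negbTE hj) expr0 mulr1 add0r.
Qed.

Lemma A_pos n j : (Q j.+1 <= n)%N -> (n < Q j.+1 + (2 * j.+1 + 1))%N ->
  \sum_(1 <= i < n.+1) term n i = B j + s j.+1.
Proof.
move=> h1 h2.
have hk := Q_ge j.+1.
rewrite (big_cat_nat (n:=j.+1)) //=; last by lia.
rewrite (big_cat_nat (n:=j.+2) (m:=j.+1)) //=; last by lia.
rewrite big_nat1 (@term_half n j.+1 h1 h2).
have -> : \sum_(j.+2 <= i < n.+1) term n i = 0.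
  rewrite big_nat_cond big1 // => i /andP[/andP[hi _] _]; apply: term_zero.
  have := @Q_mono _ _ hi; rewrite QS; lia.
rewrite addr0; congr (_ + _); rewrite /B; apply: eq_big_nat => i /andP[_ hi].
apply: term_full.
have := @Q_mono _ _ hi; rewrite QS; lia.
Qed.

Lemma A_neg n k : (Q k + (2 * k + 1) <= n)%N -> (n < Q k.+1)%N ->
  \sum_(1 <= i < n.+1) term n i = B k.
Proof.
move=> h1 h2.
have hk := Q_ge k.
rewrite (big_cat_nat (n:=k.+1)) //=; last by lia.
have -> : \sum_(k.+1 <= i < n.+1) term n i = 0.
  rewrite big_nat_cond big1 // => i /andP[/andP[hi _] _]; apply: term_zero.
  have := @Q_mono _ _ hi; lia.
rewrite addr0 /B; apply: eq_big_nat => i /andP[_ hi].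
apply: term_full.
have := @Q_mono _ _ (hi : (i <= k)%N); lia.
Qed.

Theorem lemma5p2 (n : nat) (m : int) :
  (0 < n)%N ->
  is_pfloor n%:Z (pent m) ->
  acoef n =
    let s : int := (-1) ^+ `|n%:Z - pent m|%N in
    if 0 < m then
      (if odd `|m|%N then s else - s)
    else
      (if odd `|m|%N then 0 else - (2 * s)).
Proof.
move=> n0 [_ [hle hmax]].
rewrite acoefE AE /=.
case: m hle hmax => [[|j]|k] hle hmax.
- have := hmax (pent (- Posz 1)) (ex_intro _ _ erefl).
  rewrite pentN pentP /Q /= lez_nat => /(_ _)/implyP; lia.
- rewrite pentP lez_nat in hle.
  have h2 : (n < Q j.+1 + (2 * j.+1 + 1))%N.
    rewrite ltnNge; apply/negP => h.
    have := hmax _ (ex_intro _ (- Posz j.+2) erefl).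
    rewrite pentN pentP !lez_nat => /(_ h); lia.
  rewrite (@A_pos n j hle h2) pentP (_ : 0 < Posz j.+1 = true) // distnEl // signB // -/(s _) /=.
  rewrite Bval sS.
  case: (boolP (odd j)) => hj /=.
  + rewrite -[(-1) ^+ j]signr_odd hj expr1 mulrN1 mulrN opprK; congr (_ * _); lia.
  + by rewrite -[(-1) ^+ j]signr_odd (negbTE hj) expr0 mulr1 add0r.
- rewrite NegzE pentN lez_nat in hle *.
  have h2 : (n < Q k.+1)%N.
    rewrite ltnNge; apply/negP => h.
    have := hmax _ (ex_intro _ (Posz k.+1) erefl).
    rewrite pentN pentP !lez_nat => /(_ h); rewrite QS; lia.
  rewrite (@A_neg n k hle h2) distnEl // signB // exprD sign_odd1 -/(s _) /=.
  rewrite Bval.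
  case: (boolP (odd k)) => hj /=.
  + by rewrite mulrN1 !mulrN opprK mulrCA.
  + lia.
Qed.
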